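(* Let $\{X_\gamma\}_{\gamma\in\Gamma}$ be a family of strictly convex real Banach spaces such that $|\Gamma|\geq 2$ and, for every $\gamma$, $\dim(X_\gamma)\geq 2$ and $Sm(X_\gamma)$ is norm dense in $S_{X_\gamma}$. Let $Z$ denote either $Z_0=\bigoplus^{c_0}_{\gamma\in\Gamma}X_\gamma$ or $Z_\infty=\bigoplus^{\ell_\infty}_{\gamma\in\Gamma}X_\gamma$. Let $Y$ be a real Banach space and $\Delta:S_Z\to S_Y$ a surjective isometry such that for every $\gamma\in\Gamma$ and $x\in S_{X_\gamma}$ the restriction of $\Delta$ to $A(\gamma,x)$ is affine. Then $$\psi(\Delta(z))=\varphi_x(z(\gamma))$$ for all $\gamma\in\Gamma$, all $x\in Sm(X_\gamma)$, all $\psi\in\mathrm{supp}(\gamma,x)$, and all $z\in S_Z$ such that $\|z(\gamma')\|=1$ for some $\gamma'\neq\gamma$.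
   Context: All Banach spaces are real. $Z_\infty$ is the space of families $z=(z(\gamma))_{\gamma\in\Gamma}$, $z(\gamma)\in X_\gamma$, with $\|z\|=\sup_\gamma\|z(\gamma)\|<\infty$; $Z_0$ is its closed subspace of families with $\{\gamma:\|z(\gamma)\|>\varepsilon\}$ finite for all $\varepsilon>0$. A Banach space is strictly convex if every point of its unit sphere is an extreme point of its closed unit ball. $x\in S_X$ is a smooth point if there is a unique $f\in S_{X^*}$ with $f(x)=1$; $Sm(X)$ is the set of smooth points and, for $x\in Sm(X)$, $\varphi_x$ denotes that unique functional. For $\gamma\in\Gamma$ and $x\in S_{X_\gamma}$, $A(\gamma,x)=\{z\in S_Z: z(\gamma)=x\}$ (a convex set), and $\mathrm{supp}(\gamma,x)=\{\psi\in S_{Y^*}:\psi^{-1}(\{1\})\cap B_Y=\Delta(A(\gamma,x))\}$. ''The restriction of $\Delta$ to $A(\gamma,x)$ is affine'' means $\Delta(\alpha a+(1-\alpha)b)=\alpha\Delta(a)+(1-\alpha)\Delta(b)$ for all $a,b\in A(\gamma,x)$, $\alpha\in[0,1]$. *)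

(* Defs.v *)
From HB Require Import structures.
From mathcomp Require Import all_boot all_order all_algebra.
From mathcomp Require Import all_classical all_reals.
From mathcomp Require Import topology normedtype.
Set Implicit Arguments. Unset Strict Implicit. Unset Printing Implicit Defensive.
Import Order.TTheory GRing.Theory Num.Theory.
Import numFieldNormedType.Exports.
Local Open Scope classical_set_scope.
Local Open Scope ring_scope.

Section Defs.
Variable R : realType.

Section Space.
Variable X : normedModType R.

Definition unit_ball : set X := [set x | `|x| <= 1].
Definition unit_sphere : set X := [set x | `|x| = 1].

Definition extreme_point_ball (x : X) : Prop :=
  unit_ball x /\
  forall (y z : X) (t : R), unit_ball y -> unit_ball z -> 0 < t < 1 ->
    x = t *: y + (1 - t) *: z -> y = z.

Definition strictly_convex : Prop :=
  forall x : X, unit_sphere x -> extreme_point_ball x.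

Definition dim_ge2 : Prop :=
  exists u v : X, forall a b : R, a *: u + b *: v = 0 -> a = 0 /\ b = 0.

Definition is_functional (f : X -> R) : Prop :=
  (forall (a : R) (u v : X), f (a *: u + v) = a * f u + f v) /\ continuous f.

Definition dual_norm (f : X -> R) : R := sup [set `|f x| | x in unit_ball].

Definition dual_sphere (f : X -> R) : Prop := is_functional f /\ dual_norm f = 1.

Definition smooth_point (x : X) : Prop :=
  unit_sphere x /\ exists! f : X -> R, dual_sphere f /\ f x = 1.

Definition Sm : set X := [set x | smooth_point x].

End Space.

Section Sum.
Variables (Γ : Type) (X : Γ -> normedModType R).

Definition fam := forall g : Γ, X g.

Definition fadd (a b : fam) : fam := fun g => a g + b g.
Definition fscale (t : R) (a : fam) : fam := fun g => t *: a g.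
Definition fsub (a b : fam) : fam := fun g => a g - b g.

Definition fam_bounded (z : fam) : Prop := exists M : R, forall g, `|z g| <= M.
Definition fam_c0 (z : fam) : Prop :=
  forall e : R, 0 < e -> finite_set [set g | e < `|z g|].

(* membership in Z: c0 = true gives Z_0, c0 = false gives Z_infty *)
Definition inZ (c0 : bool) (z : fam) : Prop :=
  fam_bounded z /\ (if c0 then fam_c0 z else True).

Definition znorm (z : fam) : R := sup (range (fun g => `|z g|)).

Definition SZ (c0 : bool) : set fam := [set z | inZ c0 z /\ znorm z = 1].

Definition Aset (c0 : bool) (g : Γ) (x : X g) : set fam :=
  [set z | SZ c0 z /\ z g = x].

End Sum.

Definition surj_isometry_spheres (Γ : Type) (X : Γ -> normedModType R)
  (c0 : bool) (Y : normedModType R) (D : fam X -> Y) : Prop :=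
  (forall z, SZ c0 z -> @unit_sphere Y (D z)) /\
  (forall z w, SZ c0 z -> SZ c0 w -> `|D z - D w| = znorm (fsub z w)) /\
  (forall y, @unit_sphere Y y -> exists2 z, SZ c0 z & D z = y).

Definition affine_on_A (Γ : Type) (X : Γ -> normedModType R)
  (c0 : bool) (Y : normedModType R) (D : fam X -> Y) (g : Γ) (x : X g) : Prop :=
  forall a b, Aset c0 x a -> Aset c0 x b -> forall t : R, 0 <= t <= 1 ->
    D (fadd (fscale t a) (fscale (1 - t) b)) = t *: D a + (1 - t) *: D b.

Definition supp (Γ : Type) (X : Γ -> normedModType R)
  (c0 : bool) (Y : normedModType R) (D : fam X -> Y) (g : Γ) (x : X g)
  (psi : Y -> R) : Prop :=
  dual_sphere psi /\
  [set y | psi y = 1] `&` @unit_ball Y = D @` Aset c0 x.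

End Defs.
Arguments unit_ball {R} X _.
Arguments unit_sphere {R} X _.
Arguments Sm {R} X _.

(* Main.v *)
Require Import Defs.
From HB Require Import structures.
From mathcomp Require Import all_boot all_order all_algebra.
From mathcomp Require Import all_classical all_reals.
From mathcomp Require Import topology normedtype.
From mathcomp Require Import ring lra.
Import Order.TTheory GRing.Theory Num.Theory.
Import numFieldNormedType.Exports.
Local Open Scope classical_set_scope.
Local Open Scope ring_scope.
Set Implicit Arguments. Unset Strict Implicit. Unset Printing Implicit Defensive.

Section Helpers.
Variable R : realType.

Lemma sup_range_max (I : Type) (f : I -> R) (i0 : I) (M : R) :
  (forall i, f i <= M) -> f i0 = M -> sup (range f) = M.
Proof.
move=> H H0; apply/le_anti/andP; split.
  by apply: ge_sup; [exists (f i0); exists i0|move=> _ [i _ <-]].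
rewrite -H0; apply: ub_le_sup; last by exists i0.
by exists M => _ [i _ <-].
Qed.

Lemma lip1_continuous (V : normedModType R) (f : V -> R) :
  (forall a b, `|f a - f b| <= `|a - b|) -> continuous f.
Proof.
move=> H x; apply/cvgrPdist_lt => e e0.
near=> y; apply: le_lt_trans (H x y) _.
near: y; exact: cvgr_dist_lt.
Unshelve. all: by end_near.
Qed.

Section Fun.
Variable V : normedModType R.
Variable f : V -> R.
Hypothesis Hf : is_functional f.

Lemma fun0 : f 0 = 0.
Proof.
case: Hf => L _; have h := L 1 0 0; rewrite scale1r addr0 mul1r in h.
by apply: (@addrI _ (f 0)); rewrite addr0 -h.
Qed.

Lemma funZ a u : f (a *: u) = a * f u.
Proof. by case: Hf => L _; rewrite -[a *: u]addr0 L fun0 addr0. Qed.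

Lemma funD u v : f (u + v) = f u + f v.
Proof. by case: Hf => L _; have := L 1 u v; rewrite scale1r mul1r. Qed.

Lemma funN u : f (- u) = - f u.
Proof. by rewrite -scaleN1r funZ mulN1r. Qed.

Lemma funB u v : f (u - v) = f u - f v.
Proof. by rewrite funD funN. Qed.
End Fun.

Lemma dual_bound (V : normedModType R) (f : V -> R) :
  dual_sphere f -> forall y, `|f y| <= `|y|.
Proof.
move=> [Hf Hn] y.
set S := [set `|f x| | x in unit_ball V].
have hs : has_sup S.
  apply: contrapT => /sup_out; rewrite /dual_norm in Hn.
  by rewrite -/S => E; move: Hn; rewrite E => /eqP; rewrite eq_sym oner_eq0.
have ub := sup_upper_bound hs; rewrite -/S in Hn *.
have [->|y0] := eqVneq y 0; first by rewrite fun0 // !normr0.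
have ny : 0 < `|y| by rewrite normr_gt0.
have : S `|f (`|y|^-1 *: y)|.
  exists (`|y|^-1 *: y) => //; rewrite /unit_ball /= normrZ normfV normr_id.
  by rewrite mulVf // gt_eqF.
move=> /ub; rewrite [sup S]Hn funZ // normrM normfV normr_id.
by rewrite ler_pdivrMl // mulr1.
Qed.

End Helpers.

Section Fam.
Variables (R : realType) (Γ : Type) (X : Γ -> normedModType R).

Definition upd (z : fam X) (γ : Γ) (v : X γ) : fam X := fun g0 =>
  match pselect (γ = g0) with
  | left e => eq_rect γ X v g0 e
  | right _ => z g0
  end.
Arguments upd z {γ} v _.

Lemma upd_eq (z : fam X) γ (v : X γ) : upd z v γ = v.
Proof.
rewrite /upd; case: pselect => [e|//].
by rewrite (Prop_irrelevance e erefl).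
Qed.

Lemma upd_neq (z : fam X) γ (v : X γ) g0 : g0 <> γ -> upd z v g0 = z g0.
Proof. by rewrite /upd; case: pselect => // e /(_ (esym e)). Qed.

Lemma updK (z : fam X) γ : upd z (z γ) = z.
Proof.
apply: functional_extensionality_dep => g0.
have [e|n] := pselect (γ = g0); first by case: g0 / e; rewrite upd_eq.
by rewrite upd_neq // => e; apply: n.
Qed.

Lemma SZ_le1 c0 (z : fam X) : SZ c0 z -> forall g, `|z g| <= 1.
Proof.
move=> [[[M HM] _] Hn] g; rewrite -Hn; apply: ub_le_sup; last by exists g.
by exists M => _ [i _ <-].
Qed.

Lemma znorm_fsub_one (a b : fam X) γ :
  (forall g, g <> γ -> a g = b g) -> znorm (fsub a b) = `|a γ - b γ|.
Proof.
move=> H; apply: (@sup_range_max R _ _ γ) => // g.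
have [e|n] := pselect (γ = g); first by case: g / e.
by rewrite /fsub H // ?subrr ?normr0 // => e; apply: n.
Qed.

Lemma upd_SZ c0 (z : fam X) γ (v : X γ) g1 : SZ c0 z -> `|v| <= 1 ->
  `|upd z v g1| = 1 -> SZ c0 (upd z v).
Proof.
move=> Hz Hv H1.
have le1 : forall g, `|upd z v g| <= 1.
  move=> g; have [e|n] := pselect (γ = g).
    by case: g / e; rewrite upd_eq.
  rewrite upd_neq. exact: (SZ_le1 Hz g). by move=> e; apply: n.
split; last exact: (@sup_range_max R _ _ g1).
split; first by exists 1.
case: c0 Hz => // -[[_ Hc] _] e e0.
apply: (@sub_finite_set _ _ ([set g | e < `|z g|] `|` [set γ])).
  move=> g /= Hg; have [ee|n] := pselect (γ = g); first by right.
  left; have ne : g <> γ by move=> ee; apply: n.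
  by move: Hg => /=; rewrite upd_neq.
by rewrite finite_setU; split; [exact: Hc|exact: finite_set1].
Qed.

Lemma upd_comb (z : fam X) γ (v w : X γ) (t : R) :
  fadd (fscale t (upd z v)) (fscale (1 - t) (upd z w)) = upd z (t *: v + (1 - t) *: w).
Proof.
apply: functional_extensionality_dep => g0; rewrite /fadd /fscale.
have [e|n] := pselect (γ = g0); first by case: g0 / e; rewrite !upd_eq.
rewrite !upd_neq; try by move=> e; apply: n.
by rewrite -scalerDl addrC subrK scale1r.
Qed.

Lemma comb_SZ c0 γ (y : X γ) (a b : fam X) (t : R) : `|y| = 1 ->
  Aset c0 y a -> Aset c0 y b -> 0 <= t <= 1 ->
  SZ c0 (fadd (fscale t a) (fscale (1 - t) b)).
Proof.
move=> Hy [Ha ay] [Hb bY] /andP[t0 t1].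
have t1' : 0 <= 1 - t by rewrite subr_ge0.
have key : forall e g, `|a g| <= e -> `|b g| <= e ->
    `|fadd (fscale t a) (fscale (1 - t) b) g| <= e.
  move=> e g ha hb; rewrite /fadd /fscale.
  apply: (le_trans (ler_normD _ _)); rewrite !normrZ !ger0_norm //.
  apply: (@le_trans _ _ (t * e + (1 - t) * e)); last by rewrite -mulrDl addrC subrK mul1r.
  by apply: lerD; apply: ler_wpM2l.
have le1 g := key 1 g (SZ_le1 Ha g) (SZ_le1 Hb g).
split; last first.
  apply: (@sup_range_max R _ _ γ) => //.
  by rewrite /fadd /fscale ay bY -scalerDl addrC subrK scale1r.
split; first by exists 1.
case: c0 Ha Hb {le1 bY ay} => // -[[_ Hca] _] -[[_ Hcb] _] e e0.
apply: (@sub_finite_set _ _ ([set g | e < `|a g|] `|` [set g | e < `|b g|])).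
  move=> g /= Hg; apply: contrapT => /not_orP[/negP]; rewrite -leNgt => h1 /negP.
  by rewrite -leNgt => h2; move: Hg; rewrite ltNge key.
by rewrite finite_setU; split; [exact: Hca|exact: Hcb].
Qed.

End Fam.

Section Ext.
Variables (R : realType) (V : normedModType R) (h : V -> R) (x : V).
Hypothesis hA : forall (v w : V) (t : R), `|v| <= 1 -> `|w| <= 1 -> 0 <= t <= 1 ->
  h (t *: v + (1 - t) *: w) = t * h v + (1 - t) * h w.
Hypothesis hL : forall v w : V, `|v| <= 1 -> `|w| <= 1 -> `|h v - h w| <= `|v - w|.
Hypothesis nx : `|x| = 1.
Hypothesis hx : h x = 1.
Hypothesis hnx : h (- x) = -1.

Let half : 1 - 2^-1 = 2^-1 :> R. Proof. lra. Qed.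
Let half01 : 0 <= (2^-1 : R) <= 1. Proof. apply/andP; split; lra. Qed.

Let h0 : h 0 = 0.
Proof.
have := hA (t := 2^-1) (v := x) (w := -x); rewrite half scalerN addrN.
rewrite nx normrN nx hx hnx => ->; rewrite ?lexx //; lra.
Qed.

Let hom (v : V) (t : R) : `|v| <= 1 -> 0 <= t <= 1 -> h (t *: v) = t * h v.
Proof.
move=> hv ht; have := hA (w := 0) hv; rewrite normr0 ler01 => /(_ _ isT ht).
by rewrite scaler0 addr0 h0 mulr0 addr0.
Qed.

Let odd (v : V) : `|v| <= 1 -> h (- v) = - h v.
Proof.
move=> hv; have := hA (t := 2^-1) (v := v) (w := -v).
rewrite half scalerN addrN h0 normrN hv => /(_ isT isT half01) /esym.
move=> E; lra.
Qed.

Let bnd (v : V) : `|v| <= 1 -> `|h v| <= `|v|.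
Proof.
move=> hv; have := hL (w := 0) hv; rewrite normr0 ler01 h0 !subr0; exact.
Qed.

Let ball_scale (v : V) (s : R) : 0 < s -> `|v| <= s -> `|s^-1 *: v| <= 1.
Proof.
move=> s0 hv; rewrite normrZ gtr0_norm ?invr_gt0 // mulrC ler_pdivrMr //.
by rewrite mul1r.
Qed.

Definition lext (v : V) : R := (`|v| + 1) * h ((`|v| + 1)^-1 *: v).

Let aux (v : V) (s s' : R) : 0 < s -> s <= s' -> `|v| <= s ->
  s' * h (s'^-1 *: v) = s * h (s^-1 *: v).
Proof.
move=> s0 ss' hv; have s'0 : 0 < s' by exact: lt_le_trans ss'.
have -> : s'^-1 *: v = (s / s') *: (s^-1 *: v).
  by rewrite scalerA; congr (_ *: _); field; apply/andP; split; lra.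
rewrite hom ?ball_scale //; last first.
  apply/andP; split; first by rewrite divr_ge0 // ltW.
  by rewrite ler_pdivrMr // mul1r.
field; lra.
Qed.

Lemma lextS (v : V) (s : R) : 0 < s -> `|v| <= s -> lext v = s * h (s^-1 *: v).
Proof.
move=> s0 hv; rewrite /lext; have r0 : 0 < `|v| + 1 by rewrite ltr_pwDr.
have [sr|rs] := lerP s (`|v| + 1); first by rewrite (aux s0 sr hv).
by rewrite (aux r0 (ltW rs)) // lerDl.
Qed.

Let lext_bnd (v : V) : `|lext v| <= `|v|.
Proof.
have r0 : 0 < `|v| + 1 by rewrite ltr_pwDr.
have hv1 : `|v| <= `|v| + 1 by rewrite lerDl.
rewrite /lext normrM gtr0_norm //.
rewrite (le_trans (ler_wpM2l (ltW r0) (bnd (ball_scale r0 hv1)))) //.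
by rewrite normrZ gtr0_norm ?invr_gt0 // mulrA mulfV ?gt_eqF // mul1r.
Qed.

Let lext_add (u v : V) : lext (u + v) = lext u + lext v.
Proof.
set r := `|u| + `|v| + 1.
have r0 : 0 < r by rewrite /r ltr_pwDr // addr_ge0.
have nu := normr_ge0 u; have nv := normr_ge0 v.
have hu : `|u| <= r by rewrite /r; lra.
have hv : `|v| <= r by rewrite /r; lra.
have huv : `|u + v| <= 2 * r.
  apply: (le_trans (ler_normD _ _)); rewrite /r; lra.
rewrite (lextS (s := 2 * r)) ?mulr_gt0 // (lextS r0 hu) (lextS r0 hv).
have -> : (2 * r)^-1 *: (u + v) = 2^-1 *: (r^-1 *: u) + (1 - 2^-1) *: (r^-1 *: v).
  by rewrite half !scalerA -scalerDr invfM.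
rewrite hA ?ball_scale // half; by field.
Qed.

Let lext_opp (u : V) : lext (- u) = - lext u.
Proof.
rewrite /lext normrN scalerN odd ?mulrN //.
apply: ball_scale; [by rewrite ltr_pwDr | by rewrite lerDl].
Qed.

Let lext_pos (a : R) (u : V) : 0 <= a -> lext (a *: u) = a * lext u.
Proof.
move=> a0; set r := (a + 1) * (`|u| + 1).
have r0 : 0 < r by rewrite /r mulr_gt0 // ltr_pwDr.
have hau : `|a *: u| <= r.
  rewrite normrZ ger0_norm // /r; apply: ler_pM => //; by rewrite lerDl.
rewrite (lextS r0 hau).
have [->|an0] := eqVneq a 0.
  by rewrite scale0r scaler0 h0 !mul0r mulr0.
have ap : 0 < a by rewrite lt0r an0.
have hu : `|u| <= r / a.
  rewrite ler_pdivlMr // /r mulrC; apply: ler_pM => //; by rewrite lerDl.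
rewrite (lextS (s := r / a)) ?divr_gt0 //.
rewrite scalerA invf_div [r^-1 * a]mulrC.
by rewrite mulrA; congr (_ * _); field.
Qed.

Let lext_lin (a : R) (u v : V) : lext (a *: u + v) = a * lext u + lext v.
Proof.
rewrite lext_add; congr (_ + _).
have [a0|a0] := lerP 0 a; first exact: lext_pos.
rewrite -[a]opprK scaleNr lext_opp lext_pos ?mulNr //.
by rewrite oppr_ge0 ltW.
Qed.

Lemma lext_dual : dual_sphere lext /\ lext x = 1 /\
  forall v, `|v| <= 1 -> lext v = h v.
Proof.
have lv : forall v, `|v| <= 1 -> lext v = h v.
  by move=> v hv; rewrite (lextS ltr01 hv) invr1 scale1r mul1r.
have lx : lext x = 1 by rewrite lv ?nx.
have isf : is_functional lext.
  split; first exact: lext_lin.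
  apply: lip1_continuous => a b.
  have -> : lext a - lext b = lext (a - b).
    by rewrite [a - b]addrC -(scaleN1r b) lext_lin mulN1r addrC.
  exact: lext_bnd.
split; last by split. split=> //; rewrite /dual_norm.
have ub : ubound [set `|lext y| | y in unit_ball V] 1.
  by move=> _ [y hy <-]; exact: le_trans (lext_bnd y) hy.
have xb : unit_ball V x by rewrite /unit_ball /= nx.
apply/le_anti/andP; split; first by apply: ge_sup => //; exists `|lext x|; exists x.
have : [set `|lext y| | y in unit_ball V] `|lext x| by exists x.
by move/(ub_le_sup (ex_intro _ 1 ub)); rewrite lx normr1.
Qed.
End Ext.

Theorem proposition3p1 (R : realType) (Γ : Type)
  (X : Γ -> completeNormedModType R) (c0 : bool)
  (Y : completeNormedModType R) (D : fam X -> Y) :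
  (exists g1 g2 : Γ, g1 <> g2) ->
  (forall g, strictly_convex (X g)) ->
  (forall g, dim_ge2 (X g)) ->
  (forall g, unit_sphere (X g) `<=` closure (Sm (X g))) ->
  surj_isometry_spheres c0 D ->
  (forall g (x : X g), unit_sphere (X g) x -> affine_on_A c0 D x) ->
  forall (g : Γ) (x : X g), Sm (X g) x ->
  forall phi : X g -> R, dual_sphere phi -> phi x = 1 ->
  forall psi : Y -> R, supp c0 D x psi ->
  forall z : fam X, SZ c0 z ->
  (exists2 g', g' <> g & `|z g'| = 1) ->
  psi (D z) = phi (z g).
Proof.
move=> _ Hsc _ _ [Hsph [Hiso Hsurj]] Haff g x [xS [f0 [_ Huniq]]] phi Hphi phix
  psi [Hpsi Hsupp] z Hz [g' g'g zg'].
have nx : `|x| = 1 by exact: xS.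
have psiF : forall p, Aset c0 x p -> psi (D p) = 1.
  move=> p Hp; have : (D @` Aset c0 x) (D p) by exists p.
  by rewrite -Hsupp => -[].
have half : 1 - 2^-1 = 2^-1 :> R by lra.
have half01 : 0 <= (2^-1 : R) <= 1 by apply/andP; split; lra.
have keyN : forall b, Aset c0 (-x) b -> psi (D b) = -1.
  move=> b Hb.
  have nnx : `|-x| = 1 by rewrite normrN.
  have yS : unit_sphere Y (- D b).
    by rewrite /unit_sphere /= normrN; exact: (Hsph _ Hb.1).
  have [p Hp Dp] := Hsurj _ yS.
  pose b' := upd p (-x).
  have Hb' : Aset c0 (-x) b'.
    split; last exact: upd_eq.
    apply: (upd_SZ (g1 := g)) => //; first by rewrite nnx.
    by rewrite upd_eq.
  have Hm := comb_SZ (X := fun g0 => X g0) nnx Hb Hb' half01.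
  have Dm := Haff g (-x) nnx b b' Hb Hb' _ half01.
  have E2 : `|D p - D b'| = 2.
    rewrite Dp -opprD.
    have -> : D b + D b' = 2 *: D (fadd (fscale 2^-1 b) (fscale (1 - 2^-1) b')).
      by rewrite Dm half scalerDr !scalerA mulfV ?scale1r // pnatr_eq0.
    rewrite normrN normrZ (Hsph _ Hm) mulr1; by rewrite ger0_norm.
  rewrite Hiso // in E2; last exact: Hb'.1.
  rewrite (znorm_fsub_one (X := fun g0 => X g0) (γ := g)) in E2; last first.
    by move=> g0 ng0; rewrite /b' upd_neq.
  rewrite /b' upd_eq opprK in E2.
  have pg1 : `|p g| <= 1 by exact: SZ_le1 Hp g.
  have mS : unit_sphere (X g) (2^-1 *: p g + (1 - 2^-1) *: x).
    by rewrite /unit_sphere /= half -scalerDr normrZ E2 gtr0_norm; [field|lra].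
  have [_ ext] := Hsc g _ mS.
  have pgx : p g = x.
    apply: (ext _ _ (2^-1)) => //; [by rewrite /unit_ball /= nx| apply/andP; split; lra].
  have : psi (D p) = 1 by apply: psiF; split.
  by rewrite Dp (funN Hpsi.1) => E; rewrite -[psi (D b)]opprK E.
set u := z g'.
have nu : `|u| = 1 by [].
pose h := fun v : X g => psi (D (upd z v)).
have inA : forall v : X g, `|v| <= 1 -> Aset c0 u (upd z v).
  move=> v hv; split; last by rewrite upd_neq.
  by apply: (upd_SZ (g1 := g')) => //; rewrite upd_neq.
have hA : forall (v w : X g) (t : R), `|v| <= 1 -> `|w| <= 1 -> 0 <= t <= 1 ->
    h (t *: v + (1 - t) *: w) = t * h v + (1 - t) * h w.
  move=> v w t hv hw ht; rewrite /h -upd_comb.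
  rewrite (Haff g' u nu _ _ (inA v hv) (inA w hw) t ht).
  by rewrite (funD Hpsi.1) !(funZ Hpsi.1).
have hL : forall v w : X g, `|v| <= 1 -> `|w| <= 1 -> `|h v - h w| <= `|v - w|.
  move=> v w hv hw; rewrite /h -(funB Hpsi.1).
  apply: le_trans (dual_bound Hpsi _) _.
  rewrite Hiso; [|exact: (inA v hv).1|exact: (inA w hw).1].
  rewrite (znorm_fsub_one (X := fun g0 => X g0) (γ := g)) ?upd_eq //.
  by move=> g0 n; rewrite !upd_neq.
have hx : h x = 1.
  have hx1 : `|x| <= 1 by rewrite nx.
  by apply: psiF; split; [exact: (inA x hx1).1|exact: upd_eq].
have hnx : h (- x) = -1.
  apply: keyN; split; last exact: upd_eq.
  have hx1 : `|-x| <= 1 by rewrite normrN nx.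
  exact: (inA (-x) hx1).1.
have [Hl [lx lv]] := lext_dual hA hL nx hx hnx.
have e1 := Huniq _ (conj Hl lx).
have e2 := Huniq _ (conj Hphi phix).
have -> : psi (D z) = h (z g) by rewrite /h updK.
by rewrite -e2 e1 lv //; exact: (SZ_le1 Hz g).
Qed.
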